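(* Let $C\subseteq\mathbb{R}^{n+1}$ be a proper open cone with base-point $b\in C$, let $S,T\in\mathcal T(C)\setminus\{C\}$, $p\in S$, $q\in T$, and suppose $f_{S,p}|_C$ and $f_{T,q}|_C$ are Busemann points of the Funk geometry on $C$. Then \[\inf_{(x_k)_k}\ \liminf_{k\to\infty}\big(\mathcal F_C(b,x_k)+f_{T,q}(x_k)\big)=\begin{cases}\mathcal F_S(b,p)+\mathcal F_T(p,q)-\mathcal F_T(b,q) & \text{if } S\subseteq T,\\ \infty & \text{otherwise,}\end{cases}\] where the infimum is taken over all sequences $(x_k)_k$ in $C$ converging to $f_{S,p}|_C$ in the Funk sense on $C$.
   Context: An open cone is a nonempty open convex $C$ with $\lambda C\subseteq C$ for $\lambda>0$; proper means $\overline C\cap(-\overline C)=\{0\}$. For an open cone $K$, $y\in K$ and $x\in\mathbb{R}^{n+1}$, $M(x/y;K)=\inf\{\lambda>0\colon\lambda y-x\in\overline K\}$ and the Funk metric is $\mathcal F_K(x,y)=\log M(x/y;K)$. For $z\in\partial C$, $\tau(C,z)=\{\lambda(w-z)\colon\lambda>0,w\in C\}$; for a collection $\Pi$ of open cones $\Gamma(\Pi)=\{\tau(T,z)\colon T\in\Pi,z\in\partial T\}$, and $\mathcal T(C)=\bigcup_{k=1}^n\Gamma^k(\{C\})$ (all these cones contain $C$). For $T\in\mathcal T(C)$ (or $T=C$) and $p\in T$, $f_{T,p}(w)=\mathcal F_T(w,p)-\mathcal F_T(b,p)$. A sequence $(x_k)$ in $C$ converges to $f\colon C\to\mathbb{R}$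 in the Funk sense on $C$ if $f_{C,x_k}\to f$ pointwise on $C$. A function $f\colon C\to\mathbb{R}$ is a Busemann point of the Funk geometry on $C$ if some sequence $(x_k)$ in $C$ that is a Funk-metric $\epsilon$-almost-geodesic for some $\epsilon>0$ (i.e. $\sum_{i=0}^{m}\mathcal F_C(x_i,x_{i+1})\leq\mathcal F_C(x_0,x_{m+1})+\epsilon$ for all $m\geq0$) converges to $f$ in the Funk sense, and $f$ is not of the form $\mathcal F_C(\cdot,p)-\mathcal F_C(b,p)$ with $p\in C$. *)

(* Defs.v *)
From HB Require Import structures.
From mathcomp Require Import all_boot all_order all_algebra.
From mathcomp Require Import all_classical all_reals all_analysis.
Set Implicit Arguments. Unset Strict Implicit. Unset Printing Implicit Defensive.
Import Order.TTheory GRing.Theory Num.Theory.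
Import numFieldNormedType.Exports.
Local Open Scope classical_set_scope.
Local Open Scope ring_scope.

Section Funk.
Variables (R : realType) (n : nat).
Local Notation V := 'rV[R]_(n.+1).

Definition convex_set_ (C : set V) : Prop :=
  forall x y t, C x -> C y -> 0 <= t -> t <= 1 -> C (t *: x + (1 - t) *: y).

Definition open_cone (C : set V) : Prop :=
  C !=set0 /\ open C /\ convex_set_ C /\
  (forall (l : R) x, 0 < l -> C x -> C (l *: x)).

Definition proper_cone (C : set V) : Prop :=
  closure C `&` [set x | closure C (- x)] = [set 0].

Definition bdry (C : set V) : set V := closure C `\` interior C.

Definition tau (C : set V) (z : V) : set V :=
  [set v | exists l : R, exists w : V, 0 < l /\ C w /\ v = l *: (w - z)].

Definition Gamma (Pi : set (set V)) : set (set V) :=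
  [set K | exists T : set V, exists z : V,
     Pi T /\ open_cone T /\ bdry T z /\ K = tau T z].

Definition Tcones (C : set V) : set (set V) :=
  [set K | exists k : nat, (1 <= k <= n)%N /\ iter k Gamma [set C] K].

Definition Mfunk (K : set V) (x y : V) : R :=
  inf [set l : R | 0 < l /\ closure K (l *: y - x)].

Definition funk (K : set V) (x y : V) : R := ln (Mfunk K x y).

Definition fTp (b : V) (T : set V) (p : V) (w : V) : R :=
  funk T w p - funk T b p.

Definition funk_conv (C : set V) (b : V) (x : nat -> V) (f : V -> R) : Prop :=
  forall w, C w -> (fun k => fTp b C (x k) w) @ \oo --> f w.

Definition almost_geodesic (C : set V) (eps : R) (x : nat -> V) : Prop :=
  (forall k, C (x k)) /\
  forall m : nat,
    \sum_(i < m.+1) funk C (x i) (x i.+1) <= funk C (x 0%N) (x m.+1) + eps.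

Definition busemann (C : set V) (b : V) (f : V -> R) : Prop :=
  (exists (x : nat -> V) (eps : R),
      0 < eps /\ almost_geodesic C eps x /\ funk_conv C b x f) /\
  ~ (exists p, C p /\ forall w, C w -> f w = fTp b C p w).

End Funk.

(* Main.v *)
Require Import Defs.
From HB Require Import structures.
From mathcomp Require Import all_boot all_order all_algebra.
From mathcomp Require Import all_classical all_reals all_analysis.
From mathcomp Require Import ring lra.
Import Order.TTheory GRing.Theory Num.Theory.
Import numFieldNormedType.Exports.
Local Open Scope classical_set_scope.
Local Open Scope ring_scope.

Ltac vec := apply/rowP => ?; rewrite !mxE; ring.

Section Cones.
Context {R : realType} {n : nat}.
Local Notation V := 'rV[R]_(n.+1).
Implicit Types (K : set V) (u v w : V).

Lemma open_ball {K u} : open K -> K u ->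
  exists2 r : R, 0 < r & forall v, `|u - v| < r -> K v.
Proof.
move=> oK Ku.
have : nbhs u K by apply: open_nbhs_nbhs; split.
move=> /nbhs_ballP [r r0 H]; exists r => // v uv; apply: H.
by rewrite -ball_normE /=.
Qed.

Lemma closure_ball {K v} :
  (forall r : R, 0 < r -> exists2 u, K u & `|v - u| < r) -> closure K v.
Proof.
move=> H B /nbhs_ballP [r r0 rB].
have [u Ku vu] := H r r0; exists u; split => //; apply: rB.
by rewrite -ball_normE /=.
Qed.

Lemma ball_closure {K v} : closure K v ->
  forall r : R, 0 < r -> exists2 u, K u & `|v - u| < r.
Proof.
move=> cK r r0.
have : nbhs v (ball v r) by apply: nbhsx_ballx.
move=> /cK [u [Ku]]; rewrite -ball_normE /= => vu; by exists u.
Qed.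

Lemma cone_scale {K l v} : open_cone K -> 0 < l -> K v -> K (l *: v).
Proof. by case=> _ [_ [_ H]] l0 Kv; apply: H. Qed.

Lemma cone_add {K a b} : open_cone K -> K a -> K b -> K (a + b).
Proof.
move=> cK Ka Kb; case: (cK) => _ [_ [cv _]].
have h := cv a b (2^-1) Ka Kb.
have h1 : 0 <= (2^-1 : R) by rewrite invr_ge0.
have h2 : (2^-1 : R) <= 1 by rewrite invf_le1 // ler1n.
have := @cone_scale K 2 _ cK _ (h h1 h2); rewrite ltr0n => /(_ isT).
have -> : (1 - 2^-1 : R) = 2^-1 by rewrite {1}(splitr 1) mul1r addrK.
by rewrite scalerDr !scalerA divff ?pnatr_eq0 // !scale1r.
Qed.

Lemma open_shift {K u} v : open K -> K u ->
  exists2 d : R, 0 < d & forall s, 0 <= s -> s <= d -> K (u + s *: v).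
Proof.
move=> oK Ku; have [r r0 H] := open_ball oK Ku.
exists (r / (`|v| + 1)); first by rewrite divr_gt0 // ltr_pwDr.
move=> s s0 sd; apply: H; rewrite opprD addrA subrr add0r normrN normrZ.
rewrite ger0_norm //; apply: (le_lt_trans (y := r / (`|v| + 1) * `|v|)).
  by rewrite ler_wpM2r.
rewrite -mulrA gtr_pMr // ltr_pdivrMl ?mulr1 ?ltrDl //.
Qed.

Lemma cl_add_int {K v k} : open_cone K -> closure K v -> K k -> K (v + k).
Proof.
move=> cK clv Kk; case: (cK) => _ [oK _].
have [r r0 H] := open_ball oK Kk.
have [u Ku vu] := ball_closure clv _ r0.
have -> : v + k = u + (k + (v - u)) by rewrite [k + _]addrC addrA [u + _]addrC subrK.
apply: cone_add => //; apply: H.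
by rewrite opprD addrA subrr add0r normrN.
Qed.

Lemma cl_shift {K v k} : open_cone K -> K k ->
  (forall e : R, 0 < e -> K (v + e *: k)) -> closure K v.
Proof.
move=> cK Kk H; apply: closure_ball => r r0.
exists (v + (r / (`|k| + 1)) *: k); first by apply: H; rewrite divr_gt0 // ltr_pwDr.
rewrite opprD addrA subrr add0r normrN normrZ ger0_norm; last first.
  by rewrite ltW // divr_gt0 // ltr_pwDr.
rewrite -mulrA gtr_pMr // ltr_pdivrMl ?mulr1 ?ltrDl //.
Qed.

Lemma cl_int {K v} : K v -> closure K v.
Proof. exact: subset_closure. Qed.

Lemma cone_nonempty {K} : open_cone K -> exists k, K k.
Proof. by case=> -[k Kk] _; exists k. Qed.

Lemma cl_add {K a b} : open_cone K -> closure K a -> closure K b ->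
  closure K (a + b).
Proof.
move=> cK ca cb; have [k Kk] := cone_nonempty cK.
apply: (cl_shift cK Kk) => e e0; rewrite -addrA.
apply: cl_add_int => //; apply: cl_add_int => //; exact: cone_scale.
Qed.

Lemma cl_scale {K a} l : open_cone K -> 0 <= l -> closure K a ->
  closure K (l *: a).
Proof.
move=> cK l0 ca; have [k Kk] := cone_nonempty cK.
apply: (cl_shift cK Kk) => e e0.
rewrite le_eqVlt in l0; case/orP: l0 => [/eqP <-|l0].
  by rewrite scale0r add0r; exact: cone_scale.
have -> : l *: a + e *: k = l *: (a + (e / l) *: k).
  by rewrite scalerDr scalerA mulrCA divff ?gt_eqF // mulr1.
apply: cone_scale => //; apply: cl_add_int => //; apply: cone_scale => //.
exact: divr_gt0.
Qed.

Lemma cl0 {K} : open_cone K -> closure K 0.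
Proof.
move=> cK; have [k Kk] := cone_nonempty cK.
by rewrite -(scale0r k); apply: cl_scale => //; exact: cl_int.
Qed.

Lemma cl_sub {K K' v} : K `<=` K' -> closure K v -> closure K' v.
Proof. by move=> KK'; apply: closureS. Qed.

Lemma open_int {K} : open K -> interior K = K.
Proof. by move/interior_id. Qed.

End Cones.

Lemma prod_approx {R : realType} {A B d : R} : 0 <= A -> 0 <= B -> 0 < d ->
  exists2 e, 0 < e & (A + e) * (B + e) <= A * B + d.
Proof.
move=> A0 B0 d0.
have P : 0 < A + B + 1 + d by lra.
exists (d / (A + B + 1 + d)); first exact: divr_gt0.
set e := d / _.
have H : e * (A + B + 1 + d) = d by rewrite /e divfK ?gt_eqF.
have e0 : 0 < e by exact: divr_gt0.
have e1 : e <= 1.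
  by rewrite /e ler_pdivrMr // mul1r; lra.
nra.
Qed.


Lemma ler_gtP' (R : realType) (x y : R) : (forall z, y < z -> x <= z) -> x <= y.
Proof. by move=> H; apply/ler_addgt0Pr => e e0; apply: H; rewrite ltrDl. Qed.

Section Funk2.
Context {R : realType} {n : nat}.
Local Notation V := 'rV[R]_(n.+1).
Implicit Types (K : set V) (u v w x y z : V).

Definition OC K := open_cone K /\ ~ K 0.

Definition Mset K x y := [set l : R | 0 < l /\ closure K (l *: y - x)].

Lemma MfunkE K x y : Mfunk K x y = inf (Mset K x y).
Proof. by []. Qed.

Lemma Mset_ne {K} x {y} : open_cone K -> K y -> Mset K x y !=set0.
Proof.
move=> cK Ky; case: (cK) => _ [oK _].
have [d d0 H] := open_shift (- x) oK Ky.
have := H d (ltW d0) (lexx _) => Kd.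
exists d^-1; split; first by rewrite invr_gt0.
have dp : 0 < d^-1 by rewrite invr_gt0.
apply: cl_int; have := cone_scale cK dp Kd.
by rewrite scalerDr scalerA mulVf ?gt_eqF // scale1r.
Qed.

Lemma Mset_lb K x y : has_lbound (Mset K x y).
Proof. by exists 0 => l [/ltW]. Qed.

Lemma Mset_inf K x y : open_cone K -> K y -> has_inf (Mset K x y).
Proof. by move=> cK Ky; split; [exact: Mset_ne|exact: Mset_lb]. Qed.

Lemma M_ge0 {K x y} : open_cone K -> K y -> 0 <= Mfunk K x y.
Proof.
move=> cK Ky; apply: lb_le_inf; first exact: Mset_ne.
by move=> l [/ltW].
Qed.

Lemma M_le {K x y l} : 0 < l -> closure K (l *: y - x) -> Mfunk K x y <= l.
Proof. by move=> l0 cl; apply: ge_inf; [exact: Mset_lb|split]. Qed.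

Lemma Mset_up {K x y l l'} : open_cone K -> K y -> Mset K x y l -> l <= l' ->
  Mset K x y l'.
Proof.
move=> cK Ky [l0 cl] ll'; split; first exact: lt_le_trans ll'.
have -> : l' *: y - x = (l *: y - x) + (l' - l) *: y by vec.
apply: (cl_add cK cl); apply: (cl_scale _ cK _ (cl_int Ky)).
by rewrite subr_ge0.
Qed.

Lemma M_gt {K x y mu} : open_cone K -> K y -> Mfunk K x y < mu -> Mset K x y mu.
Proof.
move=> cK Ky Mmu.
have h : 0 < mu - Mfunk K x y by rewrite subr_gt0.
have [l Sl lmu] := inf_adherent h (Mset_inf K x y cK Ky).
rewrite addrC subrK in lmu.
exact: Mset_up cK Ky Sl (ltW lmu).
Qed.

Lemma M_gtcl {K x y mu} : open_cone K -> K y -> Mfunk K x y < mu ->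
  closure K (mu *: y - x).
Proof. by move=> cK Ky /(M_gt cK Ky) []. Qed.

Lemma M_gt0 {K x y mu} : open_cone K -> K y -> Mfunk K x y < mu -> 0 < mu.
Proof. by move=> cK Ky Mmu; exact: le_lt_trans (M_ge0 cK Ky) Mmu. Qed.

Lemma M_pos {K x y} : OC K -> K x -> K y -> 0 < Mfunk K x y.
Proof.
move=> [cK nK0] Kx Ky; rewrite lt_neqAle (M_ge0 cK Ky) andbT.
apply/negP => /eqP M0; apply: nK0.
suff clx : closure K (- x) by have := cl_add_int cK clx Kx; rewrite addNr.
apply: (cl_shift cK Ky) => e e0.
have e2 : 0 < e / 2 by rewrite divr_gt0.
have h : Mfunk K x y < e / 2 by rewrite -M0.
have := cl_add_int cK (M_gtcl cK Ky h) (cone_scale cK e2 Ky).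
have -> : e / 2 *: y - x + e / 2 *: y = - x + e *: y.
  by apply/rowP => i; rewrite !mxE; field.
by [].
Qed.

Lemma M_num {K x x' y} : open_cone K -> K y -> closure K (x' - x) ->
  Mfunk K x y <= Mfunk K x' y.
Proof.
move=> cK Ky cl; apply: ler_gtP' => mu Mmu.
have cl' := M_gtcl cK Ky Mmu.
apply: (M_le (M_gt0 cK Ky Mmu)).
have -> : mu *: y - x = (mu *: y - x') + (x' - x) by vec.
exact: cl_add cK cl' cl.
Qed.

Lemma M_den {K x y y'} : open_cone K -> K y -> K y' -> closure K (y' - y) ->
  Mfunk K x y' <= Mfunk K x y.
Proof.
move=> cK Ky Ky' cl; apply: ler_gtP' => mu Mmu.
have cl' := M_gtcl cK Ky Mmu.
have mu0 := M_gt0 cK Ky Mmu.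
apply: (M_le mu0).
have -> : mu *: y' - x = mu *: (y' - y) + (mu *: y - x) by vec.
exact: cl_add cK (cl_scale _ cK (ltW mu0) cl) cl'.
Qed.

Lemma M_self {K y} : open_cone K -> Mfunk K y y <= 1.
Proof.
move=> cK; apply: (M_le ltr01).
by rewrite scale1r subrr; exact: cl0.
Qed.

Lemma cl_comb {K x y z a b} : open_cone K -> 0 < a ->
  closure K (b *: z - y) -> closure K (a *: y - x) -> closure K ((a * b) *: z - x).
Proof.
move=> cK a0 cb ca.
have -> : (a * b) *: z - x = a *: (b *: z - y) + (a *: y - x).
  by rewrite scalerBr scalerA addrA subrK.
exact: cl_add cK (cl_scale _ cK (ltW a0) cb) ca.
Qed.

Lemma M_tri {K x y z} : open_cone K -> K y -> K z ->
  Mfunk K x z <= Mfunk K x y * Mfunk K y z.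
Proof.
move=> cK Ky Kz.
have A0 := M_ge0 (x := x) cK Ky; have B0 := M_ge0 (x := y) cK Kz.
apply/ler_addgt0Pr => d d0.
have [e e0 H] := prod_approx A0 B0 d0.
apply: le_trans H.
have ha : Mfunk K x y < Mfunk K x y + e by rewrite ltrDl.
have hb : Mfunk K y z < Mfunk K y z + e by rewrite ltrDl.
have ca := M_gtcl cK Ky ha; have cb := M_gtcl cK Kz hb.
have a0 := M_gt0 cK Ky ha; have b0 := M_gt0 cK Kz hb.
apply: (M_le (mulr_gt0 a0 b0)).
exact: cl_comb cK a0 cb ca.
Qed.

Lemma M_mono {K K' x y} : open_cone K -> open_cone K' -> K `<=` K' -> K y ->
  Mfunk K' x y <= Mfunk K x y.
Proof.
move=> cK cK' KK' Ky; apply: lb_le_inf; first exact: Mset_ne.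
move=> l [l0 cl]; apply: (M_le l0); exact: cl_sub cl.
Qed.

Lemma ln_le {x y : R} : 0 < x -> 0 < y -> x <= y -> ln x <= ln y.
Proof.
move=> x0 y0 xy.
have hx : x \in Num.pos by rewrite posrE.
have hy : y \in Num.pos by rewrite posrE.
by rewrite (ler_ln hx hy).
Qed.

Lemma lnMp {x y : R} : 0 < x -> 0 < y -> ln (x * y) = ln x + ln y.
Proof.
move=> x0 y0.
have hx : x \in Num.pos by rewrite posrE.
have hy : y \in Num.pos by rewrite posrE.
exact: lnM hx hy.
Qed.

Lemma funk_tri {K x y z} : OC K -> K x -> K y -> K z ->
  funk K x z <= funk K x y + funk K y z.
Proof.
move=> oK Kx Ky Kz.
have p1 := M_pos oK Kx Ky; have p2 := M_pos oK Ky Kz; have p3 := M_pos oK Kx Kz.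
rewrite /funk -(lnMp p1 p2).
exact: ln_le p3 (mulr_gt0 p1 p2) (M_tri oK.1 Ky Kz).
Qed.

Lemma funk_mono {K K' x y} : OC K -> OC K' -> K `<=` K' -> K x -> K y ->
  funk K' x y <= funk K x y.
Proof.
move=> oK oK' KK' Kx Ky.
have p1 := M_pos oK Kx Ky; have p2 := M_pos oK' (KK' _ Kx) (KK' _ Ky).
exact: ln_le p2 p1 (M_mono oK.1 oK'.1 KK' Ky).
Qed.

End Funk2.


Section Struct.
Context {R : realType} {n : nat}.
Local Notation V := 'rV[R]_(n.+1).
Implicit Types (C K S T : set V) (u v w x y z : V).

Lemma tauE {T z v} : open_cone T ->
  tau T z v <-> exists l : R, 0 < l /\ T (v + l *: z).
Proof.
move=> cT; split.
  move=> [l [w [l0 [Tw ->]]]]; exists l; split => //.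
  have -> : l *: (w - z) + l *: z = l *: w by rewrite -scalerDr subrK.
  exact: cone_scale cT l0 Tw.
move=> [l [l0 Tv]]; exists l, (l^-1 *: (v + l *: z)); split => //; split.
  by apply: cone_scale cT _ Tv; rewrite invr_gt0.
have ln0 : l != 0 by rewrite gt_eqF.
by apply/rowP => i; rewrite !mxE; field.
Qed.

Definition QP C S := forall p, S p ->
  exists w, C w /\ closure S (p - w) /\ closure S (w - p).

Definition Unb C S := forall T, open_cone T -> C `<=` T -> ~ (S `<=` T) ->
  exists S', OC S' /\ S' `<=` S /\ S' `<=` T /\ QP C S' /\
    exists d, closure S' d /\ closure S (- d) /\ ~ closure T (- d).

Definition Good C S := OC S /\ C `<=` S /\ QP C S /\ Unb C S.

Lemma Good_base C : OC C -> Good C C.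
Proof.
move=> oC; split => //; split => //; split.
  move=> p Cp; exists p; split => //; rewrite subrr; split; exact: cl0 oC.1.
by move=> T _ CT nCT; exfalso; exact: nCT CT.
Qed.

Section Step.
Variables (C T : set V) (z : V).
Hypotheses (oC : OC C) (GT : Good C T) (bz : bdry T z).

Let oT : OC T := GT.1.
Let cT : open_cone T := oT.1.

Lemma clz : closure T z.
Proof. by case: bz. Qed.

Lemma nTz : ~ T z.
Proof. case: bz => _; rewrite (open_int cT.2.1); exact. Qed.

Lemma T_sub_tau : T `<=` tau T z.
Proof.
move=> v Tv; apply/(tauE cT); exists 1; split; first exact: ltr01.
rewrite scale1r addrC; exact: cl_add_int cT clz Tv.
Qed.

Lemma tau_open : open (tau T z).
Proof.
rewrite openE => v /(tauE cT) [l [l0 Tv]].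
have [r r0 H] := open_ball cT.2.1 Tv.
rewrite /interior; apply/nbhs_ballP; exists r => // u.
rewrite -ball_normE /= => vu; apply/(tauE cT); exists l; split => //.
apply: H; by have -> : v + l *: z - (u + l *: z) = v - u by vec.
Qed.

Lemma tau_cone : open_cone (tau T z).
Proof.
split.
  have [k Tk] := cone_nonempty cT; exists k; exact: T_sub_tau _ Tk.
split; first exact: tau_open.
split.
  move=> x y t /(tauE cT) [l1 [l10 T1]] /(tauE cT) [l2 [l20 T2]] t0 t1.
  apply/(tauE cT); exists (t * l1 + (1 - t) * l2); split; first by nra.
  have := cT.2.2.1 _ _ t T1 T2 t0 t1.
  have -> : t *: (x + l1 *: z) + (1 - t) *: (y + l2 *: z) =
    t *: x + (1 - t) *: y + (t * l1 + (1 - t) * l2) *: z by vec.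
  by [].
move=> l x l0 /(tauE cT) [l1 [l10 T1]]; apply/(tauE cT).
exists (l * l1); split; first exact: mulr_gt0.
have -> : l *: x + (l * l1) *: z = l *: (x + l1 *: z) by vec.
exact: cone_scale cT l0 T1.
Qed.

Lemma tau_n0 : ~ tau T z 0.
Proof.
move=> /(tauE cT) [l [l0]]; rewrite add0r => Tz; apply: nTz.
have := cone_scale cT (_ : 0 < l^-1) Tz; rewrite scalerA mulVf ?gt_eqF // scale1r.
by apply; rewrite invr_gt0.
Qed.

Lemma tau_OC : OC (tau T z).
Proof. split; [exact: tau_cone|exact: tau_n0]. Qed.

Lemma cl_tau_mz : closure (tau T z) (- z).
Proof.
have [k Tk] := cone_nonempty cT.
apply: (cl_shift tau_cone (T_sub_tau _ Tk)) => e e0.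
apply/(tauE cT); exists 1; split; first exact: ltr01.
have -> : - z + e *: k + 1 *: z = e *: k by vec.
exact: cone_scale cT e0 Tk.
Qed.

Lemma cl_tau_z : closure (tau T z) z.
Proof. exact: cl_sub T_sub_tau clz. Qed.

Lemma QP_tau : QP C (tau T z).
Proof.
move=> p /(tauE cT) [l [l0 Tp]].
have [w [Cw [c1 c2]]] := GT.2.2.1 _ Tp.
exists w; split; first exact: Cw.
split.
  have -> : p - w = (p + l *: z - w) + l *: (- z) by vec.
  exact: cl_add tau_cone (cl_sub T_sub_tau c1) (cl_scale _ tau_cone (ltW l0) cl_tau_mz).
have -> : w - p = (w - (p + l *: z)) + l *: z by vec.
exact: cl_add tau_cone (cl_sub T_sub_tau c2) (cl_scale _ tau_cone (ltW l0) cl_tau_z).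
Qed.

Lemma Unb_tau : Unb C (tau T z).
Proof.
move=> T' cT' CT' nST'.
have [TT'|nTT'] := pselect (T `<=` T').
  exists T; split; first exact: oT.
  split; first exact: T_sub_tau.
  split; first exact: TT'.
  split; first exact: GT.2.2.1.
  exists z; split; first exact: clz.
  split; first exact: cl_tau_mz.
  move=> clmz; apply: nST' => v /(tauE cT) [l [l0 Tv]].
  have := cl_add_int cT' (cl_scale _ cT' (ltW l0) clmz) (TT' _ Tv).
  by have -> : l *: - z + (v + l *: z) = v by vec.
have [S' [oS' [S'T [S'T' [QS' [d [c1 [c2 c3]]]]]]]] :=
  GT.2.2.2 T' cT' CT' nTT'.
exists S'; split => //; split; first by move=> v /S'T /T_sub_tau.
split; first exact: S'T'.
split; first exact: QS'.
exists d; split; first exact: c1.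
split; last exact: c3.
exact: cl_sub T_sub_tau c2.
Qed.

Lemma Good_tau : Good C (tau T z).
Proof.
split; first exact: tau_OC.
split; first by move=> v /GT.2.1 /T_sub_tau.
split; [exact: QP_tau|exact: Unb_tau].
Qed.

End Step.

Lemma OC_of_proper C : open_cone C -> proper_cone C -> OC C.
Proof.
move=> cC pC; split => // C0.
have [r r0 H] := open_ball cC.2.1 C0.
have allC : forall v, C v.
  move=> v; set c := r / (2 * (`|v| + 1)).
  have c0 : 0 < c by rewrite divr_gt0 // mulr_gt0 // ltr_pwDr.
  have : C (c *: v).
    apply: H; rewrite sub0r normrN normrZ ger0_norm ?(ltW c0) //.
    rewrite /c -mulrA gtr_pMr // ltr_pdivrMl ?mulr_gt0 ?ltr_pwDr //.
    have nv := normr_ge0 v; rewrite ?mulr1; lra.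
  have ci : 0 < c^-1 by rewrite invr_gt0.
  move=> /(cone_scale cC ci).
  by rewrite scalerA mulVf ?gt_eqF // scale1r.
set e : V := const_mx 1.
have : (closure C `&` [set x | closure C (- x)]) e.
  by split; apply: cl_int; apply: allC.
rewrite pC => /= e0.
have := congr1 (fun M : V => M 0 0) e0; rewrite /e !mxE => /eqP.
by rewrite oner_eq0.
Qed.

Lemma Good_iter C k S : OC C -> iter k (@Gamma R n) [set C] S -> Good C S.
Proof.
move=> oC; elim: k S => [|k IH] S /=.
  by move=> ->; exact: Good_base.
move=> [T [z [PT [cT [bz ->]]]]]; apply: Good_tau => //; exact: IH.
Qed.

End Struct.


Lemma nat_gt {R : realType} (x : R) : exists N : nat, x < N%:R.
Proof. by exists (Num.truncn x).+1; exact: truncnS_gt. Qed.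

Lemma eta_approx {R : realType} {g mu : R} : 0 <= g -> g < mu ->
  exists2 e, 0 < e & (1 + e) * ((1 + e) * g + e + e) <= mu.
Proof.
move=> g0 gmu.
have P : 0 < 3 * g + 4 + (mu - g) by lra.
exists ((mu - g) / (3 * g + 4 + (mu - g))); first by apply: divr_gt0 => //; lra.
set e := _ / _.
have H : e * (3 * g + 4 + (mu - g)) = mu - g by rewrite /e divfK ?gt_eqF.
have e0 : 0 < e by apply: divr_gt0 => //; lra.
have e1 : e <= 1 by rewrite /e ler_pdivrMr // mul1r; lra.
nra.
Qed.

Lemma fin_ex {P : nat -> nat -> Prop} :
  (forall i, exists J, forall j, (J <= j)%N -> P i j) ->
  forall N, exists J, forall i, (i <= N)%N -> forall j, (J <= j)%N -> P i j.
Proof.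
move=> H; elim=> [|N [J HJ]].
  have [J HJ] := H 0%N; exists J => i; rewrite leqn0 => /eqP ->; exact: HJ.
have [J' HJ'] := H N.+1; exists (maxn J J') => i; rewrite leq_eqVlt.
case/orP => [/eqP -> j Jj|iN j Jj].
  by apply: HJ'; apply: leq_trans Jj; exact: leq_maxr.
by apply: HJ => //; apply: leq_trans Jj; exact: leq_maxl.
Qed.

Section Approx.
Context {R : realType} {n : nat}.
Local Notation V := 'rV[R]_(n.+1).
Implicit Types (C K S T : set V) (u v w x y z : V).

Definition Approx C S := forall p, S p -> exists x : nat -> V,
  (forall j, C (x j)) /\ (forall j, closure S (p - x j)) /\
  forall w, C w -> forall mu, Mfunk S w p < mu ->
    exists J, forall j, (J <= j)%N -> Mfunk C w (x j) <= mu.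

Definition Fdense C (r : nat -> V) := forall w, C w -> forall e : R, 0 < e ->
  exists i, C (r i) /\ Mfunk C w (r i) <= 1 + e /\ Mfunk C (r i) w <= 1 + e.

Lemma Approx_base C : OC C -> Approx C C.
Proof.
move=> oC p Cp; exists (fun=> p); split => //; split.
  by move=> j; rewrite subrr; exact: cl0 oC.1.
by move=> w Cw mu /ltW h; exists 0%N.
Qed.

Section Step.
Variables (C T : set V) (z : V) (r : nat -> V).
Hypotheses (oC : OC C) (GT : Good C T) (AT : Approx C T) (bz : bdry T z)
  (rd : Fdense C r).

Let oT : OC T := GT.1.
Let cT : open_cone T := oT.1.
Let CT : C `<=` T := GT.2.1.
Let S := tau T z.
Let GS : Good C S := Good_tau C T z GT bz.
Let oS : OC S := GS.1.
Let cS : open_cone S := oS.1.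
Let CS : C `<=` S := GS.2.1.
Let TS : T `<=` S := T_sub_tau C T z GT bz.

Lemma step_P1 p l0 : 0 < l0 -> T (p + l0 *: z) -> forall w mu,
  Mfunk S w p < mu -> exists t0 : nat, forall t : nat, (t0 <= t)%N ->
  Mfunk T w (p + (l0 + t%:R) *: z) <= mu.
Proof.
move=> l00 Tp w mu gmu.
have Sp : S p by apply/(tauE cT); exists l0.
set g := Mfunk S w p.
have g0 : 0 <= g := M_ge0 cS Sp.
have mid : g < (g + mu) / 2 by rewrite ltr_pdivlMr //; lra.
have cl1 := M_gtcl cS Sp mid.
have mu0 : 0 < mu by lra.
have h : 0 < mu - (g + mu) / 2 by lra.
have Sm : S (mu *: p - w).
  have := cl_add_int cS cl1 (cone_scale cS h Sp).
  by have -> : (g + mu) / 2 *: p - w + (mu - (g + mu) / 2) *: p = mu *: p - w by vec.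
have [la [la0 Tla]] := (tauE cT).1 Sm.
have [N HN] := nat_gt (la / mu).
exists N => t Nt.
apply: (M_le mu0).
have ge : 0 <= mu * (l0 + t%:R) - la.
  have h1 : la / mu <= l0 + t%:R.
    apply: le_trans (ltW HN) _; apply: ler_wpDl; first exact: ltW.
    by rewrite ler_nat.
  have hk : mu * (la / mu) = la by rewrite mulrC divfK ?gt_eqF.
  nra.
have := cl_add_int cT (cl_scale _ cT ge (clz T z bz)) Tla.
have -> : (mu * (l0 + t%:R) - la) *: z + (mu *: p - w + la *: z) =
  mu *: (p + (l0 + t%:R) *: z) - w by vec.
exact: cl_int.
Qed.

Lemma Approx_tau : Approx C S.
Proof.
move=> p /(tauE cT) [l0 [l00 Tp]].
pose y (t : nat) := p + (l0 + t%:R) *: z.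
have Ty t : T (y t).
  have := cl_add_int cT (cl_scale t%:R cT (ler0n _ _) (clz T z bz)) Tp.
  by have -> : t%:R *: z + (p + l0 *: z) = y t by rewrite /y; vec.
have clpy t : closure S (p - y t).
  have -> : p - y t = (l0 + t%:R) *: - z by rewrite /y; vec.
  apply: (cl_scale _ cS _ (cl_tau_mz C T z GT bz)); rewrite addr_ge0 // ltW //.
have [xs Hxs] := choice (fun t => AT _ (Ty t)).
have HJ t : exists J, forall i, (i <= t)%N -> forall j, (J <= j)%N ->
    C (r i) -> Mfunk C (r i) (xs t j) <= Mfunk T (r i) (y t) + t.+1%:R^-1.
  apply: (@fin_ex (fun i j => C (r i) ->
    Mfunk C (r i) (xs t j) <= Mfunk T (r i) (y t) + t.+1%:R^-1)).
  move=> i; have [Cri|nCri] := pselect (C (r i)); last first.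
    by exists 0%N => j _ /nCri.
  have [_ [_ H]] := Hxs t.
  have lt : Mfunk T (r i) (y t) < Mfunk T (r i) (y t) + t.+1%:R^-1.
    by rewrite ltrDl invr_gt0 ltr0n.
  have [J HJ] := H _ Cri _ lt.
  by exists J => j Jj _; exact: HJ.
have [Jf HJf] := choice HJ.
exists (fun t => xs t (Jf t)); split; first by move=> t; exact: (Hxs t).1.
split.
  move=> t; have [_ [H _]] := Hxs t.
  have -> : p - xs t (Jf t) = (p - y t) + (y t - xs t (Jf t)) by vec.
  exact: cl_add cS (clpy t) (cl_sub TS (H (Jf t))).
move=> w Cw mu gmu.
have Sp : S p by apply/(tauE cT); exists l0.
have Sw : S w := CS _ Cw.
set g := Mfunk S w p in gmu.
have g0 : 0 <= g := M_ge0 cS Sp.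
have [e e0 He] := eta_approx g0 gmu.
have [i [Cri [H1 H2]]] := rd _ Cw e e0.
have gri : Mfunk S (r i) p <= (1 + e) * g.
  apply: le_trans (M_tri cS Sw Sp) _.
  apply: (ler_wpM2r g0); apply: (le_trans _ H2).
  exact: M_mono oC.1 oS.1 CS Cw.
have lti : Mfunk S (r i) p < (1 + e) * g + e by apply: le_lt_trans gri _; rewrite ltrDl.
have [t1 Ht1] := step_P1 _ _ l00 Tp _ _ lti.
have [N2 HN2] := nat_gt e^-1.
exists (maxn t1 (maxn i N2)) => t.
rewrite !geq_max => /and3P [t1t it N2t].
have ht : t.+1%:R^-1 <= e.
  have h1 : e^-1 <= t.+1%:R.
    apply: le_trans (ltW HN2) _; rewrite ler_nat; exact: leqW.
  have pe : e \in Num.pos by rewrite posrE.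
  have pt : (t.+1%:R^-1 : R) \in Num.pos by rewrite posrE invr_gt0 ltr0n.
  by rewrite -(lef_pV2 pe pt) invrK.
have A := HJf t i it (Jf t) (leqnn _) Cri.
have B := Ht1 t t1t.
have Cx : C (xs t (Jf t)) := (Hxs t).1 (Jf t).
have Cri' : C (r i) := Cri.
apply: le_trans (M_tri oC.1 Cri Cx) _.
apply: le_trans He.
apply: ler_pM.
- exact: M_ge0 oC.1 Cri.
- exact: M_ge0 oC.1 Cx.
- exact: H1.
- apply: le_trans A _; exact: lerD B ht.
Qed.

End Step.

Lemma Approx_iter C (r : nat -> V) k S : OC C -> Fdense C r ->
  iter k (@Gamma R n) [set C] S -> Approx C S.
Proof.
move=> oC rd; elim: k S => [|k IH] S /=.
  by move=> ->; exact: Approx_base.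
move=> [T [z [PT [cT [bz ->]]]]].
exact: (Approx_tau C T z r oC (Good_iter _ _ _ oC PT) (IH _ PT) bz rd).
Qed.

End Approx.


Section Dense.
Context {R : realType} {n : nat}.
Local Notation V := 'rV[R]_(n.+1).

Lemma rat_approx (x d : R) : 0 < d -> exists q : rat, `|x - ratr q| < d.
Proof.
move=> d0.
have [y [bxy [q _ qy]]] := @dense_rat R (ball x d) (ex_intro _ x (ballxx x d0))
  (ball_open x d).
by exists q; rewrite qy; move: bxy; rewrite -ball_normE.
Qed.

Lemma mx_lt (x : V) d : 0 < d -> (forall j, `|x 0 j| < d) -> `|x| < d.
Proof.
move=> d0 H; have -> : `|x| = mx_norm x by [].
rewrite mx_normrE.
apply: bigmax_lt => // -[i j] _ /=.
by rewrite (ord1 i); exact: H.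
Qed.

Lemma vec_approx (w : V) d : 0 < d ->
  exists q : 'rV[rat]_(n.+1), `|w - map_mx ratr q| < d.
Proof.
move=> d0.
have [f Hf] := choice (fun j : 'I_(n.+1) => rat_approx (w 0 j) d d0).
exists (\row_j f j); apply: mx_lt => // j.
by rewrite !mxE.
Qed.

Definition rseq (i : nat) : V :=
  match @unpickle 'rV[rat]_(n.+1) i with
  | Some q => map_mx ratr q
  | None => 0
  end.

Lemma rseq_all (q : 'rV[rat]_(n.+1)) : exists i, rseq i = map_mx ratr q.
Proof. by exists (pickle q); rewrite /rseq pickleK. Qed.

Lemma Fdense_rseq (C : set V) : OC C -> Fdense C rseq.
Proof.
move=> oC w Cw e e0.
have cC := oC.1.
have Cew : C (e *: w) := cone_scale cC e0 Cw.
have [r1 r10 H1] := open_ball cC.2.1 Cw.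
have [r2 r20 H2] := open_ball cC.2.1 Cew.
have e1 : 0 < 1 + e by lra.
set d := Num.min r1 (r2 / (1 + e)).
have d0 : 0 < d by rewrite lt_min r10 divr_gt0.
have [q Hq] := vec_approx w d d0.
have [i Hi] := rseq_all q.
exists i; rewrite Hi; set v := map_mx ratr q in Hq *.
have hd1 : `|w - v| < r1 by apply: lt_le_trans Hq _; rewrite ge_min lexx.
have hd2 : (1 + e) * `|w - v| < r2.
  rewrite -ltr_pdivlMl //; apply: lt_le_trans Hq _.
  by rewrite ge_min mulrC lexx orbT.
have Cv : C v := H1 _ hd1.
split; first exact: Cv.
split.
  apply: (M_le e1); apply: cl_int; apply: H2.
  have -> : e *: w - ((1 + e) *: v - w) = (1 + e) *: (w - v) by vec.
  by rewrite normrZ ger0_norm ?ltW.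
apply: (M_le e1); apply: cl_int; apply: H2.
have -> : e *: w - ((1 + e) *: w - v) = - (w - v) by vec.
rewrite normrN; apply: le_lt_trans hd2.
by rewrite ler_peMl // ?normr_ge0 // lerDl ltW.
Qed.

End Dense.


Section Seq.
Context {R : realType}.

Lemma ev_of {P : nat -> Prop} : (\forall k \near \oo, P k) -> exists N, forall k, (N <= k)%N -> P k.
Proof. by move=> [N _ HN]; exists N => k Nk; apply: HN. Qed.

Lemma of_ev {P : nat -> Prop} N : (forall k, (N <= k)%N -> P k) -> \forall k \near \oo, P k.
Proof. by move=> H; exists N => // k; exact: H. Qed.

Local Open Scope ereal_scope.
Lemma liminf_ge (u v : nat -> R) (L : R) : (forall k, (v k <= u k)%R) -> v @ \oo --> L ->
  L%:E <= limn_einf (fun k => (u k)%:E).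
Proof.
move=> vu /cvgrPdist_le vL.
apply/lee_subgt0Pr => e e0.
have [N HN] := ev_of (vL e e0).
rewrite limn_einf_lim; apply: lime_ge; first exact: is_cvg_einfs.
apply: (of_ev N) => m Nm.
apply: le_ereal_inf_tmp => _ [k /= mk <-].
rewrite -EFinD lee_fin; apply: le_trans (vu k).
have := HN k (leq_trans Nm mk).
have := ler_norm (L - v k); lra.
Qed.

Lemma liminf_le (u w : nat -> R) (L : R) : (forall k, (u k <= w k)%R) -> w @ \oo --> L ->
  limn_einf (fun k => (u k)%:E) <= L%:E.
Proof.
move=> uw /cvgrPdist_le wL.
apply/lee_addgt0Pr => e e0.
have [N HN] := ev_of (wL e e0).
rewrite limn_einf_lim; apply: lime_le; first exact: is_cvg_einfs.
apply: (of_ev N) => m Nm.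
apply: (@le_trans _ _ (u m)%:E).
  by apply: ereal_inf_lbound; exists m => /=.
rewrite -EFinD lee_fin; apply: le_trans (uw m) _.
have := HN m Nm.
have := ler_norm (L - w m); rewrite distrC; have := ler_norm (w m - L); lra.
Qed.

Lemma pinfty_of (X : \bar R) : (forall B : R, B%:E <= X) -> X = +oo.
Proof.
case: X => [r| |] // H.
  have h := H (r + 1)%R; rewrite lee_fin in h; clear H.
  by rewrite gerDl ler10 in h.

by have := H 0%R.
Qed.

End Seq.

Section Main.
Context {R : realType} {n : nat}.
Local Notation V := 'rV[R]_(n.+1).
Implicit Types (C K S T : set V) (u v w x y z : V).

Lemma arith1 (a c d e f g : R) : a <= d + e -> d <= c ->
  a - (c - f) - g <= f + (e - g).
Proof. move=> h1 h2; lra. Qed.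

Lemma ln_cvg (f : nat -> R) (a : R) : 0 < a -> f @ \oo --> a ->
  (fun k => ln (f k)) @ \oo --> ln a.
Proof.
move=> a0 fa.
have h := (@continuous_cvg nat R R \oo _ f (@ln R) a (continuous_ln a0) fa).
exact: h.
Qed.

Lemma lower_w C S T b p q (x : nat -> V) w : OC C -> OC T -> C `<=` T ->
  (forall k, C (x k)) -> funk_conv C b x (fTp b S p) -> C w -> T q ->
  ((funk T w q - fTp b S p w - funk T b q)%:E <=
    limn_einf (fun k => (funk C b (x k) + fTp b T q (x k))%:E))%E.
Proof.
move=> oC oT CT Cx conv Cw Tq.
apply: (liminf_ge _ (fun k => funk T w q - fTp b C (x k) w - funk T b q)).
  move=> k; rewrite /fTp.
  have h1 := funk_tri oT (CT _ Cw) (CT _ (Cx k)) Tq.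
  have h2 := funk_mono oC oT CT Cw (Cx k).
  exact: arith1 h1 h2.
apply: cvgB; last exact: cvg_cst.
apply: cvgB; first exact: cvg_cst.
exact: conv w Cw.
Qed.

Lemma Unbd T q u d : OC T -> T q -> ~ closure T (- d) ->
  forall c : R, exists t : R, 0 <= t /\ c <= Mfunk T (u + t *: d) q.
Proof.
move=> oT Tq ncl c; apply: contrapT => H; apply: ncl.
have H' t : 0 <= t -> Mfunk T (u + t *: d) q < c.
  move=> t0; rewrite ltNge; apply/negP => h; apply: H; exists t; split => //.
have cT := oT.1.
apply: (cl_shift cT Tq) => e e0.
have Teq := cone_scale cT e0 Tq.
have [dl dl0 Hd] := open_shift (u - c *: q) cT.2.1 Teq.
have T1 := Hd dl (ltW dl0) (lexx _).
have ti : 0 <= dl^-1 by rewrite invr_ge0 ltW.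
have cl1 := M_gtcl cT Tq (H' _ ti).
have := cl_add_int cT (cl_scale dl cT (ltW dl0) cl1) T1.
have dn : dl != 0 by rewrite gt_eqF.
have -> : dl *: (c *: q - (u + dl^-1 *: d)) + (e *: q + dl *: (u - c *: q)) =
  - d + e *: q by apply/rowP => i; rewrite !mxE; field.
by [].
Qed.

Lemma Mconv C S p (x : nat -> V) w : OC C -> OC S -> C `<=` S -> S p ->
  (forall k, C (x k)) -> (forall k, closure S (p - x k)) ->
  (forall w, C w -> forall mu, Mfunk S w p < mu ->
    exists J, forall j, (J <= j)%N -> Mfunk C w (x j) <= mu) ->
  C w -> (fun k => Mfunk C w (x k)) @ \oo --> Mfunk S w p.
Proof.
move=> oC oS CS Sp Cx clx H Cw.
apply/cvgrPdist_le => e e0.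
have lt : Mfunk S w p < Mfunk S w p + e by rewrite ltrDl.
have [J HJ] := H w Cw _ lt.
apply: (of_ev J) => j Jj.
have up := HJ j Jj.
have lo : Mfunk S w p <= Mfunk C w (x j).
  apply: le_trans (M_mono oC.1 oS.1 CS (Cx j)).
  exact: M_den oS.1 (CS _ (Cx j)) Sp (clx j).
rewrite distrC ger0_norm; last by rewrite subr_ge0.
by rewrite lerBlDl.
Qed.

Lemma funk_le0 S x p : OC S -> S x -> S p -> closure S (p - x) -> funk S x p <= 0.
Proof.
move=> oS Sx Sp cl.
have h1 := M_num oS.1 Sp cl.
have h2 := M_self (y := p) oS.1.
rewrite /funk -(@ln1 R); apply: ln_le (M_pos oS Sx Sp) ltr01 (le_trans h1 h2).
Qed.

Lemma funk_num K x x' y : OC K -> K x -> K y -> closure K (x' - x) ->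
  funk K x y <= funk K x' y.
Proof.
move=> oK Kx Ky cl; apply: ln_le (M_pos oK Kx Ky) _ (M_num oK.1 Ky cl).
exact: lt_le_trans (M_pos oK Kx Ky) (M_num oK.1 Ky cl).
Qed.

Lemma arith2 (a a' c f g h : R) : c <= 0 -> a' <= a ->
  f + a' - g <= a - (c - f) - g.
Proof. move=> h1 h2; lra. Qed.

Lemma arith3 (u a c g f : R) : a <= c + g -> u <= a ->
  f + (u - g) <= f + c.
Proof. move=> h1 h2; lra. Qed.

End Main.


Lemma arith4 {R : realType} (f u g a' d e : R) : u <= d + a' -> d <= e -> e <= 0 ->
  f + (u - g) <= f + a' - g.
Proof. move=> h1 h2 h3; lra. Qed.

Lemma arith5 {R : realType} (B a c f g L : R) : B + g - f + L <= a -> c <= L ->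
  B <= a - (c - f) - g.
Proof. move=> h1 h2; lra. Qed.

Theorem proposition4p6 (R : realType) (n : nat) (C : set 'rV[R]_(n.+1))
  (b : 'rV[R]_(n.+1)) (S T : set 'rV[R]_(n.+1)) (p q : 'rV[R]_(n.+1)) :
  open_cone C -> proper_cone C -> C b ->
  Tcones C S -> S <> C -> Tcones C T -> T <> C ->
  S p -> T q ->
  busemann C b (fTp b S p) -> busemann C b (fTp b T q) ->
  let I := ereal_inf [set l : \bar R | exists x : nat -> 'rV[R]_(n.+1),
              (forall k, C (x k)) /\ funk_conv C b x (fTp b S p) /\
              l = limn_einf (fun k => (funk C b (x k) + fTp b T q (x k))%:E)] in
  (S `<=` T -> I = (funk S b p + funk T p q - funk T b q)%:E) /\
  (~ (S `<=` T) -> I = +oo%E).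
Proof.
move=> cC pC Cb TSc SnC TTc TnC Sp Tq _ _ I.
have oC := OC_of_proper C cC pC.
have [kS [_ HS]] := TSc.
have [kT [_ HT]] := TTc.
have GS := Good_iter C kS S oC HS.
have GT := Good_iter C kT T oC HT.
have oS := GS.1; have CS := GS.2.1.
have oT := GT.1; have CT := GT.2.1.
split.
- move=> ST.
  apply/eqP; rewrite eq_le; apply/andP; split.
  + have [x [Cx [clx apx]]] :=
      Approx_iter C rseq kS S oC (Fdense_rseq C oC) HS p Sp.
    have Mc w (Cw : C w) := Mconv _ _ _ _ w oC oS CS Sp Cx clx apx Cw.
    have conv : funk_conv C b x (fTp b S p).
      move=> w Cw; rewrite /fTp /funk.
      apply: cvgB; apply: ln_cvg.
      * exact: M_pos oS (CS _ Cw) Sp.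
      * exact: Mc w Cw.
      * exact: M_pos oS (CS _ Cb) Sp.
      * exact: Mc b Cb.
    apply: (@le_trans _ _ (limn_einf (fun k => (funk C b (x k) + fTp b T q (x k))%:E))).
      by apply: ereal_inf_lbound; exists x.
    apply: (liminf_le _ (fun k => funk C b (x k) + funk T p q - funk T b q)).
      move=> k; rewrite /fTp.
      have h1 := funk_tri oT (CT _ (Cx k)) (ST _ Sp) Tq.
      have h2 := funk_mono oS oT ST (CS _ (Cx k)) Sp.
      have h3 := funk_le0 _ _ _ oS (CS _ (Cx k)) Sp (clx k).
      exact: (arith4 _ _ _ _ _ _ h1 h2 h3).
    apply: cvgB; last exact: cvg_cst.
    apply: cvgD; last exact: cvg_cst.
    apply: ln_cvg; first exact: M_pos oS (CS _ Cb) Sp.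
    exact: Mc b Cb.
  + apply: le_ereal_inf_tmp => _ [x [Cx [conv ->]]].
    have [w [Cw [c1 c2]]] := GS.2.2.1 p Sp.
    apply: le_trans (lower_w _ _ _ _ _ _ _ _ oC oT CT Cx conv Cw Tq).
    rewrite lee_fin /fTp.
    have h1 := funk_le0 _ _ _ oS (CS _ Cw) Sp c1.
    have h2 := funk_num _ _ _ _ oT (ST _ Sp) Tq (cl_sub ST c2).
    exact: (arith2 _ _ _ _ _ 0 h1 h2).
- move=> nST.
  apply/eqP; rewrite eq_le leey /=; apply: le_ereal_inf_tmp => _ [x [Cx [conv ->]]].
  have [S' [oS' [S'S [S'T [QS' [d [cd [cmd ncd]]]]]]]] := GS.2.2.2 T oT.1 CT nST.
  have [u S'u] := cone_nonempty oS'.1.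
  have ms0 : 0 < Mfunk S u p := M_pos oS (S'S _ S'u) Sp.
  suff -> : limn_einf (fun k => (funk C b (x k) + fTp b T q (x k))%:E) = +oo%E.
    exact: lexx.
  apply: pinfty_of => B.
  have [t [t0 Ht]] := Unbd T q u d oT Tq ncd
    (expR (B + funk T b q - funk S b p + ln (Mfunk S u p))).
  have S'ut : S' (u + t *: d).
    have := cl_add_int oS'.1 (cl_scale t oS'.1 t0 cd) S'u.
    by rewrite addrC.
  have [w [Cw [c1 c2]]] := QS' _ S'ut.
  apply: le_trans (lower_w _ _ _ _ _ _ _ _ oC oT CT Cx conv Cw Tq).
  rewrite lee_fin /fTp.
  have clu : closure S (u - (u + t *: d)).
    have -> : u - (u + t *: d) = t *: - d by vec.
    exact: cl_scale t oS.1 t0 cmd.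
  have hS : Mfunk S w p <= Mfunk S u p.
    exact: le_trans (M_num oS.1 Sp (cl_sub S'S c1)) (M_num oS.1 Sp clu).
  have hT := le_trans Ht (M_num oT.1 Tq (cl_sub S'T c2)).
  apply: arith5.
    rewrite -[X in X <= _]expRK; apply: ln_le hT; first exact: expR_gt0.
    exact: M_pos oT (CT _ Cw) Tq.
  exact: ln_le (M_pos oS (CS _ Cw) Sp) ms0 hS.
Qed.
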